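(* Let $\{X_n\}_{n\in\mathbb N}$ be a sequence of finite metric spaces with $|X_n|\to\infty$ as $n\to\infty$. Let $X=\bigsqcup_{n\in\mathbb N}X_n$ be a coarse disjoint union, and let $P_X$ be the averaging projection of the sequence $\{X_n\}_{n\in\mathbb N}$. Then $P_X$ is quasi-local if and only if $$0=\lim_{R\to+\infty}\sup\left\{\frac{|A||B|}{|X_n|^2}:\ n\in\mathbb N,\ A,B\subseteq X_n,\ d(A,B)\geq R\right\}.$$
   Context: A coarse disjoint union of finite metric spaces $(X_n,d_n)$ is the set $X=\bigsqcup_n X_n$ with a metric $d$ that restricts to $d_n$ on each $X_n$ and satisfies $d(X_n,X_m)\to\infty$ as $n+m\to\infty$ with $m\neq n$. For a finite subset $F$ of a set $Y$, $P_F\in\mathfrak B(\ell^2(Y))$ is the orthogonal projection onto the span of $\chi_F$, i.e. $(P_F)_{x,y}=1/|F|$ if $x,y\in F$ and $0$ otherwise. The averaging projection of the sequence is $P_X=\sum_n P_{X_n}$ (strong operator topology sum) on $\ell^2(X)$. For $A\subseteq X$, $\chi_A$ also denotes the multiplication operator by the characteristic function of $A$. An operator $T\in\mathfrak B(\ell^2(X))$ has $(R,\varepsilon)$-propagation if $\|\chi_AT\chi_B\|\leq\varepsilon$ for all $A,B\subseteq X$ with $d(A,B)\geq R$; $T$ is quasi-local if for every $\varepsilon>0$ there is $R>0$ such that $T$ has $(R,\varepsilon)$-propagation. $|A|$ denotes cardinality. *)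

(* Defs.v *)
From HB Require Import structures.
From mathcomp Require Import all_boot all_order all_algebra.
From mathcomp Require Import all_classical all_reals all_analysis.
From mathcomp Require Import complex.
Set Implicit Arguments. Unset Strict Implicit. Unset Printing Implicit Defensive.
Import Order.TTheory GRing.Theory Num.Theory numFieldNormedType.Exports.
Local Open Scope classical_set_scope.
Local Open Scope ring_scope.

Definition cdu (T : nat -> finType) : Type := {n : nat & T n}.
HB.instance Definition _ (T : nat -> finType) := Choice.on (cdu T).

Definition inX (T : nat -> finType) (n : nat) (x : T n) : cdu T := existT _ n x.

Definition is_metric (R : realType) (Y : Type) (d : Y -> Y -> R) : Prop :=
  (forall x y, 0 <= d x y) /\ (forall x y, d x y = 0 <-> x = y) /\
  (forall x y, d x y = d y x) /\ (forall x y z, d x z <= d x y + d y z).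

(* d is a metric on X restricting to the metrics of the X_n (which are the
   restrictions of d), with d(X_n, X_m) -> oo as n + m -> oo, m <> n. *)
Definition coarse_disjoint_union (R : realType) (T : nat -> finType)
  (d : cdu T -> cdu T -> R) : Prop :=
  is_metric d /\
  forall K : R, exists N : nat, forall n m : nat, n <> m -> (N <= n + m)%N ->
    forall (x : T n) (y : T m), K <= d (inX x) (inX y).

Definition card_to_infty (T : nat -> finType) : Prop :=
  forall K : nat, exists N : nat, forall n, (N <= n)%N -> (K <= #|T n|)%N.

Definition msq (R : realType) (z : R[i]) : R := complex.Re z ^+ 2 + complex.Im z ^+ 2.

Definition l2norm (R : realType) (X : choiceType) (f : X -> R[i]) : \bar R :=
  sqrte (\esum_(x in [set: X]) (msq (f x))%:E).

Definition opnorm (R : realType) (X : choiceType)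
  (Top : (X -> R[i]) -> (X -> R[i])) : \bar R :=
  ereal_sup [set l2norm (Top f) | f in [set f | (l2norm f <= 1)%E]].

Definition chi (R : realType) (X : Type) (A : set X) (f : X -> R[i]) : X -> R[i] :=
  fun x => if `[< A x >] then f x else 0.

(* d(A, B) >= r, with d(A, B) = inf { d a b | a in A, b in B } (= +oo if empty) *)
Definition dist_ge (R : realType) (X : Type) (d : X -> X -> R) (A B : set X) (r : R) :=
  forall a b, A a -> B b -> r <= d a b.

Definition has_propagation (R : realType) (X : choiceType) (d : X -> X -> R)
  (Top : (X -> R[i]) -> (X -> R[i])) (r eps : R) : Prop :=
  forall A B : set X, dist_ge d A B r ->
    (opnorm (fun f => chi A (Top (chi B f))) <= eps%:E)%E.

Definition quasi_local (R : realType) (X : choiceType) (d : X -> X -> R)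
  (Top : (X -> R[i]) -> (X -> R[i])) : Prop :=
  forall eps : R, 0 < eps -> exists r : R, 0 < r /\ has_propagation d Top r eps.

(* The averaging projection P_X = sum_n P_{X_n} (SOT), written out pointwise:
   (P_X f)(x) = |X_n|^-1 * sum_{y in X_n} f y  for x in X_n. *)
Definition avg_proj (R : realType) (T : nat -> finType)
  (f : cdu T -> R[i]) : cdu T -> R[i] :=
  fun x => (#|T (projT1 x)|%:R)^-1 * \sum_(y : T (projT1 x)) f (inX y).

Definition ratio_set (R : realType) (T : nat -> finType)
  (d : cdu T -> cdu T -> R) (r : R) : set R :=
  [set q | exists (n : nat) (A B : {set T n}),
     dist_ge d [set inX a | a in [set a | a \in A]] [set inX b | b in [set b | b \in B]] r /\
     q = (#|A| * #|B|)%:R / (#|T n| ^ 2)%:R].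

(* Main.v *)
Require Import Defs.
From HB Require Import structures.
From mathcomp Require Import all_boot all_order all_algebra finmap ring lra.
From mathcomp Require Import all_classical all_reals all_analysis.
From mathcomp Require Import complex.
Import Order.TTheory GRing.Theory Num.Theory numFieldNormedType.Exports.
Local Open Scope classical_set_scope.
Local Open Scope ring_scope.
Local Open Scope complex_scope.

Lemma cs_ineq (R : realFieldType) (I : finType) (P : pred I) (x : I -> R) :
 (\sum_(i | P i) x i) ^+ 2 <= #|P|%:R * \sum_(i | P i) x i ^+ 2.
Proof.
set S1 := \sum_(i | P i) x i; set S2 := \sum_(i | P i) x i ^+ 2.
have H : 0 <= \sum_(i | P i) \sum_(j | P j) (x i - x j) ^+ 2.
  by apply: sumr_ge0 => i _; apply: sumr_ge0 => j _; exact: sqr_ge0.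
have E : \sum_(i | P i) \sum_(j | P j) (x i - x j) ^+ 2 =
   \sum_(i | P i) (x i ^+ 2 *+ #|P| - (x i * S1) *+ 2 + S2).
  apply: eq_bigr => i _.
  under eq_bigr do rewrite sqrrB.
  rewrite big_split /= sumrB sumrMnl.
  have -> : \sum_(j | P j) x i ^+ 2 = x i ^+ 2 *+ #|P| by rewrite sumr_const.
  by rewrite -mulr_sumr.
rewrite E big_split /= sumrB !sumrMnl sumr_const -mulr_suml -/S1 -/S2 in H.
move: H; rewrite -[S2 *+ _]mulr_natr -[_ *+ 2]mulr_natr expr2 [_%:R * _]mulrC.
move: (S2 * _) (S1 * S1) => a b; lra.
Qed.
Lemma fsbig_finT (R : realType) (U : finType) (F : U -> \bar R) :
  (\sum_(x \in [set: U]) F x = \sum_(x : U) F x)%E.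
Proof.
rewrite fsbig_finite //=.
apply: perm_big; apply: uniq_perm; first exact: fset_uniq.
  exact: index_enum_uniq.
move=> x; rewrite in_fset_set ?mem_index_enum; first exact/mem_set. apply: (@finite_finset U).
Qed.

Lemma inX_inj (T : nat -> finType) (n : nat) : injective (@inX T n).
Proof. move=> x y; exact: internal_Eqdep_dec.inj_pair2_eq_dec (fun a b : nat => decP (a =P b)) _ _ _ _. Qed.

Lemma fiber_esum (R : realType) (T : nat -> finType) (g : cdu T -> \bar R) :
  (forall x, 0 <= g x)%E ->
  \esum_(x in [set: cdu T]) g x = \esum_(n in [set: nat]) (\sum_(y : T n) g (inX y))%E.
Proof.
move=> g0.
pose J n : set (cdu T) := [set inX y | y in [set: T n]].
have -> : [set: cdu T] = \bigcup_(n in [set: nat]) J n.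
  apply/seteqP; split => // -[n y] _; exists n => //; exists y => //.
rewrite esum_bigcupT //; last first.
  move=> n m _ _ [x [[y _ ey] [z _ ez]]]; rewrite -ez in ey; exact: (congr1 (@projT1 _ _) ey).
apply: eq_esum => n _; rewrite esum_image; last by move=> x y _ _; exact: inX_inj.
rewrite esum_fset; [exact: fsbig_finT | exact: finite_finset | by []].
Qed.

Lemma Re_sum (R : realType) (I : finType) (P : pred I) (F : I -> R[i]) :
  complex.Re (\sum_(i | P i) F i) = \sum_(i | P i) complex.Re (F i).
Proof. by elim/big_rec2: _ => // i x y _ <-; case: (F i) y => a b [c e]. Qed.
Lemma Im_sum (R : realType) (I : finType) (P : pred I) (F : I -> R[i]) :
  complex.Im (\sum_(i | P i) F i) = \sum_(i | P i) complex.Im (F i).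
Proof. by elim/big_rec2: _ => // i x y _ <-; case: (F i) y => a b [c e]. Qed.
Section Helpers.
Variable R : realType.

Lemma msq_ge0 (z : R[i]) : 0 <= msq z.
Proof. by rewrite /msq addr_ge0 // sqr_ge0. Qed.

Lemma msqZ (c : R) (z : R[i]) : msq (c%:C * z) = c ^+ 2 * msq z.
Proof. by case: z => a b; rewrite /msq /=; ring. Qed.

Lemma msqC (c : R) : msq (c%:C) = c ^+ 2.
Proof. by rewrite /msq /= !expr0n /= addr0. Qed.

Lemma msq0 : msq (0 : R[i]) = 0.
Proof. by rewrite /msq /= !expr0n /= addr0. Qed.

Lemma natC (n : nat) : (n%:R : R[i]) = (n%:R : R)%:C.
Proof. by rewrite (rmorph_nat (real_complex R)). Qed.

Lemma invC (c : R) : (c%:C)^-1 = (c^-1)%:C.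
Proof. by rewrite (fmorphV (real_complex R)). Qed.

End Helpers.

Lemma esum_single (R : realType) (T : nat -> finType) (g : cdu T -> \bar R) (n : nat) :
  (forall x, 0 <= g x)%E ->
  (forall m (y : T m), m <> n -> g (inX y) = 0%E) ->
  \esum_(x in [set: cdu T]) g x = (\sum_(y : T n) g (inX y))%E.
Proof.
move=> g0 gn; rewrite fiber_esum //.
rewrite (eq_esum (b := fun m => if m \in [set n] then (\sum_(y : T m) g (inX y))%E else 0%E)).
  rewrite -esum_mkcond esum_set1 //; exact: sume_ge0.
move=> m _; case: ifPn => // /negP; rewrite inE => mn.
by rewrite big1 // => y _; apply: gn.
Qed.

Lemma memX_eq (T : nat -> finType) n (B : {set T n}) m (y : T m) :
  [set inX b | b in [set b | b \in B]] (inX y) -> m = n.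
Proof. by case=> b _ e; exact: (esym (congr1 (@projT1 _ _) e)). Qed.

Lemma memX_iff (T : nat -> finType) n (B : {set T n}) (y : T n) :
  [set inX b | b in [set b | b \in B]] (inX y) <-> y \in B.
Proof.
split; first by case=> b Bb /inX_inj <-.
by move=> yB; exists y.
Qed.

Section Ratio.
Variables (R : realType) (T : nat -> finType) (d : cdu T -> cdu T -> R).

Lemma ratio0 r : ratio_set d r 0.
Proof.
exists 0%N, (@finset.set0 (T 0%N)), (@finset.set0 (T 0%N)); split; last by rewrite cards0 mul0n mul0r.
by move=> a b [x] /=; rewrite finset.in_set0.
Qed.

Lemma ratio_ub r : ubound (ratio_set d r) 1.
Proof.
move=> q [n [A [B [_ ->]]]].
case N : #|T n| => [|N'].
  by rewrite (_ : (0 ^ 2)%N = 0%N) // invr0 mulr0 ler01.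
rewrite ler_pdivrMr ?ltr0n ?expn_gt0 // mul1r ler_nat -mulnn -N.
by apply: leq_mul; apply: max_card.
Qed.

Lemma ratio_has_ub r : has_ubound (ratio_set d r).
Proof. by exists 1; apply: ratio_ub. Qed.

Lemma ratio_neq0 r : ratio_set d r !=set0.
Proof. by exists 0; apply: ratio0. Qed.

Lemma sup_ratio_ge0 r : 0 <= sup (ratio_set d r).
Proof. exact: ub_le_sup (ratio_has_ub r) _ (ratio0 r). Qed.
End Ratio.

Lemma fiber_bound (R : realType) (T : nat -> finType) (d : cdu T -> cdu T -> R)
  r (A B : set (cdu T)) (f : cdu T -> R[i]) n :
  dist_ge d A B r ->
  \sum_(x : T n) msq (chi A (avg_proj (chi B f)) (inX x)) <=
  sup (ratio_set d r) * \sum_(y : T n) msq (f (inX y)).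
Proof.
move=> dAB.
set An := [set x : T n | `[< A (inX x) >]]%SET.
set Bn := [set x : T n | `[< B (inX x) >]]%SET.
set N := #|T n|.
set S := \sum_(y : T n) chi B f (inX y).
have E1 x : chi A (avg_proj (chi B f)) (inX x) = if x \in An then ((N%:R)^-1)%:C * S else 0.
  by rewrite /chi /avg_proj /= inE natC invC.
have -> : \sum_(x : T n) msq (chi A (avg_proj (chi B f)) (inX x)) =
          \sum_(x in An) (N%:R^-1) ^+ 2 * msq S.
  rewrite [RHS]big_mkcond /=; apply: eq_bigr => x _; rewrite E1.
  by case: ifP => _; rewrite ?msqZ ?msq0.
rewrite sumr_const.
have HS : S = \sum_(y in Bn) f (inX y).
  rewrite /S [RHS]big_mkcond; apply: eq_bigr => y _.
  by rewrite /chi inE.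
have CS : msq S <= #|Bn|%:R * \sum_(y in Bn) msq (f (inX y)).
  rewrite HS /msq Re_sum Im_sum big_split /= mulrDr.
  by apply: lerD; apply: cs_ineq.
have sub : \sum_(y in Bn) msq (f (inX y)) <= \sum_(y : T n) msq (f (inX y)).
  rewrite [leLHS]big_mkcond; apply: ler_sum => y _.
  by case: ifP => _ //; exact: msq_ge0.
have Y0 : 0 <= \sum_(y in Bn) msq (f (inX y)) by apply: sumr_ge0 => y _; exact: msq_ge0.
have q_in : ratio_set d r ((#|An| * #|Bn|)%:R / (N ^ 2)%:R).
  exists n, An, Bn; split => //.
  move=> a b [x xA <-] [y yB <-]; apply: dAB.
    by move: xA; rewrite /= inE => /asboolP.
  by move: yB; rewrite /= inE => /asboolP.
have q_le := ub_le_sup (@ratio_has_ub _ _ d r) q_in.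
have qE : (#|An| * #|Bn|)%:R / (N ^ 2)%:R = #|An|%:R * N%:R^-1 ^+ 2 * #|Bn|%:R :> R.
  by rewrite natrM natrX exprVn; ring.
move: q_le; rewrite qE => q_le.
set Y := \sum_(y in Bn) _ in CS sub Y0 *.
set Z := \sum_(y : T n) _ in sub *.
set s := sup _ in q_le *.
have Z0 : 0 <= Z by apply: le_trans sub.
rewrite -[_ *+ #|An|]mulr_natr mulrC mulrA.
apply: (@le_trans _ _ (#|An|%:R * N%:R^-1 ^+ 2 * (#|Bn|%:R * Y))).
  by apply: ler_wpM2l => //; rewrite mulr_ge0 // exprn_ge0 // invr_ge0.
rewrite mulrA; apply: (@le_trans _ _ (#|An|%:R * N%:R^-1 ^+ 2 * #|Bn|%:R * Z)).
  by apply: ler_wpM2l => //; rewrite !mulr_ge0 // exprn_ge0 // invr_ge0.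
by apply: ler_wpM2r.
Qed.

Lemma memX_bool (T : nat -> finType) n (B : {set T n}) (y : T n) :
  `[< [set inX b | b in [set b | b \in B]] (inX y) >] = (y \in B).
Proof. by apply/idP/idP => [/asboolP/memX_iff|/memX_iff/asboolP]. Qed.

Lemma memX_boolF (T : nat -> finType) n (B : {set T n}) m (y : T m) : m <> n ->
  `[< [set inX b | b in [set b | b \in B]] (inX y) >] = false.
Proof. by move=> mn; apply/asboolPn => /memX_eq. Qed.

Lemma l2_test (R : realType) (T : nat -> finType) n (B : {set T n}) (c : R) :
  l2norm (chi [set inX b | b in [set b | b \in B]] (fun _ => c%:C)) =
  sqrte ((c ^+ 2 *+ #|B|)%:E).
Proof.
rewrite /l2norm (@esum_single _ _ _ n); first last.
- by move=> m y mn; rewrite /chi memX_boolF // msq0.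
- by move=> x; rewrite lee_fin msq_ge0.
congr sqrte; rewrite sumEFin; congr EFin.
transitivity (\sum_(y in B) c ^+ 2); last by rewrite sumr_const.
rewrite [RHS]big_mkcond; apply: eq_bigr => y _.
by rewrite /chi memX_bool; case: (y \in B); [apply: msqC | apply: msq0].
Qed.

Lemma l2_test2 (R : realType) (T : nat -> finType) n (A B : {set T n}) (c : R) :
  l2norm (chi [set inX a | a in [set a | a \in A]]
    (avg_proj (chi [set inX b | b in [set b | b \in B]]
      (chi [set inX b | b in [set b | b \in B]] (fun _ => c%:C))))) =
  sqrte ((((#|T n|%:R)^-1 * (c *+ #|B|)) ^+ 2 *+ #|A|)%:E).
Proof.
rewrite /l2norm (@esum_single _ _ _ n); first last.
- by move=> m y mn; rewrite /chi memX_boolF // msq0.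
- by move=> x; rewrite lee_fin msq_ge0.
congr sqrte; rewrite sumEFin; congr EFin.
have inner : \sum_(y : T n) chi [set inX b | b in [set b | b \in B]]
      (chi [set inX b | b in [set b | b \in B]] (fun _ => c%:C)) (inX y) =
    (c *+ #|B|)%:C.
  rewrite (rmorphMn (real_complex R)) -sumr_const [RHS]big_mkcond /=.
  apply: eq_bigr => y _; rewrite /chi memX_bool; by case: ifP => // ->.
transitivity (\sum_(x in A) ((#|T n|%:R)^-1 * (c *+ #|B|)) ^+ 2); last by rewrite sumr_const.
rewrite [RHS]big_mkcond; apply: eq_bigr => x _.
rewrite {1}/chi memX_bool /avg_proj /= inner natC invC -(rmorphM (real_complex R)).
by case: (x \in A); [apply: msqC | apply: msq0].
Qed.

Theorem proposition3p8 (R : realType) (T : nat -> finType)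
  (d : cdu T -> cdu T -> R) :
  coarse_disjoint_union d -> card_to_infty T ->
  (quasi_local d (@avg_proj R T) <->
   sup (ratio_set d r) @[r --> +oo] --> (0 : R)).
Proof.
move=> _ _; split.
- move=> QL; apply/cvgrPdist_lt => e e0.
  set del := Num.sqrt (e / 2).
  have e20 : 0 < e / 2 by rewrite divr_gt0.
  have del0 : 0 < del by rewrite sqrtr_gt0.
  have [r [r0 Hp]] := QL del del0.
  apply: (filterS _ (nbhs_pinfty_gt (num_real r))) => t rt.
  rewrite sub0r normrN ger0_norm ?sup_ratio_ge0 //.
  apply: (@le_lt_trans _ _ (e / 2)); last by lra.
  apply: ge_sup; first exact: ratio_neq0.
  move=> q [n [A [B [dAB ->]]]].
  set A' := [set inX a | a in [set a | a \in A]] in dAB *.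
  set B' := [set inX b | b in [set b | b \in B]] in dAB *.
  have dAB' : dist_ge d A' B' r.
    by move=> a b Aa Bb; apply: le_trans (ltW rt) (dAB a b Aa Bb).
  have [B0|Bpos] := posnP #|B|.
    by rewrite B0 muln0 mul0r ltW.
  have N0 : (#|T n|%:R : R) != 0.
    by rewrite pnatr_eq0 -lt0n (leq_trans Bpos) // max_card.
  have b0 : (#|B|%:R : R) != 0 by rewrite pnatr_eq0 -lt0n.
  set c := (Num.sqrt (#|B|%:R : R))^-1.
  have cE : c ^+ 2 = (#|B|%:R)^-1 by rewrite exprVn sqr_sqrtr // ler0n.
  have H1 := Hp _ _ dAB'.
  have H2 : (l2norm (chi A' (avg_proj (chi B' (chi B' (fun _ => c%:C))))) <=
             opnorm (fun f => chi A' (avg_proj (chi B' f))))%E.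
    apply: ereal_sup_ubound; exists (chi B' (fun _ => c%:C)) => //.
    rewrite /= l2_test cE -mulr_natr mulVf //= sqrtr1 //.
  rewrite l2_test2 in H2.
  have := le_trans H2 H1.
  rewrite /del -[X in (_ <= X)%E]/(sqrte (e / 2)%:E) lee_sqrt ?lee_fin ?(ltW e20) //.
  apply: le_trans; rewrite le_eqVlt; apply/orP; left; apply/eqP.
  rewrite -[c *+ _]mulr_natr -[_ *+ #|A|]mulr_natr !exprMn cE natrM natrX exprVn.
  by field; rewrite N0 b0.
- move=> Hl eps eps0.
  have e2 : 0 < eps ^+ 2 by rewrite exprn_gt0.
  move/cvgrPdist_lt/(_ _ e2): Hl => Hnear.
  have [r r0 Hr] := pinfty_ex_gt0 Hnear.
  exists r; split => // A B dAB.
  apply: ge_ereal_sup => _ [f hf <-].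
  move: hf; rewrite /= /l2norm => hf.
  have Ef1 : (\esum_(x in [set: cdu T]) (msq (f x))%:E <= 1)%E.
    have : (sqrte (\esum_(x in [set: cdu T]) (msq (f x))%:E) <= sqrte 1%:E)%E.
      by rewrite /= sqrtr1.
    by rewrite lee_sqrt.
  have -> : eps%:E = sqrte (eps ^+ 2)%:E by rewrite /= sqrtr_sqr ger0_norm // ltW.
  rewrite lee_sqrt ?lee_fin ?sqr_ge0 //.
  set s := sup _ in Hr.
  have s_le : s <= eps ^+ 2.
    by rewrite sub0r normrN in Hr; apply: le_trans (ler_norm s) (ltW Hr).
  have s0 : 0 <= s := @sup_ratio_ge0 _ _ d r.
  have g0 (h : cdu T -> R[i]) : forall x, (0 <= (msq (h x))%:E)%E.
    by move=> x; rewrite lee_fin msq_ge0.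
  have G0 (h : cdu T -> R[i]) : forall i, (0 <= \sum_(y : T i) (msq (h (inX y)))%:E)%E.
    by move=> i; apply: sume_ge0 => y _; apply: g0.
  rewrite fiber_esum // -nneseries_esumT //.
  rewrite fiber_esum // -nneseries_esumT // in Ef1.
  apply: (@le_trans _ _ (s%:E * \sum_(i <oo) \sum_(y : T i) (msq (f (inX y)))%:E)%E).
    rewrite -nneseriesZl //; apply: lee_nneseries => [i _ _|i _]; first exact: G0.
    by rewrite !sumEFin -EFinM lee_fin; apply: fiber_bound.
  apply: le_trans (lee_wpmul2l _ Ef1) _; first by rewrite lee_fin.
  by rewrite mule1 lee_fin.
Qed.
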